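(* Let $E\in M_n(\mathbb{FT})$ be an idempotent of rank $n$, let $A$ be in the $\mathcal H$-class of $E$ in $M_n(\mathbb{FT})$, and let $\phi_A:\mathbb{R}^n\to\mathbb{R}^n$ be $x\mapsto A\otimes x$. Regarding $C(E)$ as a subset of $\mathbb{R}^n$ with the usual topology: (i) $\phi_A$ maps interior points of $C(E)$ to interior points of $C(E)$; (ii) $\phi_A$ maps boundary points of $C(E)$ to boundary points of $C(E)$; (iii) $\phi_A$ maps every point not in $C(E)$ to a boundary point of $C(E)$. Dually, right multiplication $x\mapsto x\otimes A$ (for row vectors $x$) induces an $\mathbb{FT}$-module automorphism of $R(E)$ mapping interior points of $R(E)$ to interior points and boundary points to boundary points.
   Context: $\mathbb{FT}$ is $\mathbb{R}$ with $a\oplus b=\max(a,b)$, $a\otimes b=a+b$; $M_n(\mathbb{FT})$ is the semigroup of real $n\times n$ matrices under $(A\otimes B)_{i,j}=\max_k(A_{i,k}+B_{k,j})$, acting on column vectors by $(A\otimes x)_i=\max_k(A_{i,k}+x_k)$ and on row vectors by $(x\otimes A)_j=\max_k(x_k+A_{k,j})$. $C(E)$ (resp. $R(E)$) is the set of finite componentwise maxima of columns (resp. rows) of $E$ shifted by real constants; these are $\mathbb{FT}$-modules under componentwise max and adding constants. The rank of an idempotent $E$ is the minimal cardinality of a generating set of $C(E)$. Green's relations: $a\,\mathcal{R}\,b$ iff $aS^1=bS^1$, $a\,\mathcal{L}\,b$ iff $S^1a=S^1b$, $\mathcal{H}=\mathcal{L}\cap\mathcal{R}$. *)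

(* Defs.v *)
From HB Require Import structures.
From mathcomp Require Import all_boot all_order all_algebra.
From mathcomp Require Import all_classical all_reals topology normedtype.
Set Implicit Arguments. Unset Strict Implicit. Unset Printing Implicit Defensive.
Import Order.TTheory GRing.Theory Num.Theory.
Import numFieldNormedType.Exports.
Local Open Scope ring_scope.
Local Open Scope classical_set_scope.

Section Tropical.
Variable R : realType.

(* maximum of a finite family (0 on an empty index type, never used
   for a nonempty family) *)
Definition tsum k (f : 'I_k -> R) : R :=
  match [pick i : 'I_k] with
  | Some i0 => \big[Num.max/f i0]_(i < k) f i
  | None => 0
  end.

Definition tmx m k p (A : 'M[R]_(m, k)) (B : 'M[R]_(k, p)) : 'M[R]_(m, p) :=
  \matrix_(i, j) tsum (fun l => A i l + B l j).

Definition is_max_of (I : finType) (v : R) (J : {set I}) (f : I -> R) :=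
  (exists2 j, j \in J & v = f j) /\ (forall j, j \in J -> f j <= v).

Definition tspan m p k (g : 'I_k -> 'M[R]_(m, p)) : set 'M[R]_(m, p) :=
  [set x | exists (J : {set 'I_k}) (c : 'I_k -> R),
     forall i j, is_max_of (x i j) J (fun l => g l i j + c l)].

Definition colsp n (E : 'M[R]_n) : set 'cV[R]_n := tspan (fun j => col j E).
Definition rowsp n (E : 'M[R]_n) : set 'rV[R]_n := tspan (fun i => row i E).

Definition generates m p (M : set 'M[R]_(m, p)) (s : seq 'M[R]_(m, p)) :=
  tspan (fun l : 'I_(size s) => nth 0 s l) = M.

Definition has_rank_mod m p (M : set 'M[R]_(m, p)) (r : nat) :=
  (exists s, [/\ uniq s, size s = r & generates M s]) /\
  (forall s, uniq s -> generates M s -> (r <= size s)%N).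

Definition tidempotent n (E : 'M[R]_n) := tmx E E = E.

Definition has_rank n (E : 'M[R]_n) (r : nat) := has_rank_mod (colsp E) r.

(* principal one-sided ideals in S^1 for S = M_n(FT) *)
Definition rideal n (A : 'M[R]_n) : set 'M[R]_n :=
  [set B | B = A \/ exists X, B = tmx A X].
Definition lideal n (A : 'M[R]_n) : set 'M[R]_n :=
  [set B | B = A \/ exists X, B = tmx X A].

Definition Rrel n (A B : 'M[R]_n) := rideal A = rideal B.
Definition Lrel n (A B : 'M[R]_n) := lideal A = lideal B.
Definition Hrel n (A B : 'M[R]_n) := Rrel A B /\ Lrel A B.

Definition vmax m p (x y : 'M[R]_(m, p)) := map2_mx Num.max x y.
Definition vshift m p (c : R) (x : 'M[R]_(m, p)) := map_mx (fun a => a + c) x.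

End Tropical.

Definition tboundary (T : topologicalType) (A : set T) : set T :=
  closure A `\` interior A.

(* Main.v *)
Require Import Defs.
From HB Require Import structures.
From mathcomp Require Import all_boot all_order all_algebra all_fingroup.
From mathcomp Require Import all_classical all_reals topology normedtype.
From mathcomp Require Import lra.
Import Order.TTheory GRing.Theory Num.Theory.
Import numFieldNormedType.Exports.
Local Open Scope ring_scope.
Local Open Scope classical_set_scope.

Section Basics.
Context {R : realType}.

Lemma letr {x y z : R} : x <= y -> y <= z -> x <= z.
Proof. exact: le_trans. Qed.

Lemma tsum_ub {k} (f : 'I_k -> R) i : f i <= tsum f.
Proof. rewrite /tsum; case: pickP => [i0 _|/(_ i)//]; exact: le_bigmax. Qed.

Lemma tsum_ex {k} (f : 'I_k -> R) (i : 'I_k) : exists j, tsum f = f j.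
Proof.
rewrite /tsum; case: pickP => [i0 _|/(_ i)//].
elim/big_ind: _ => [|x y [a ->] [b ->]|l _]; [by exists i0| |by exists l].
by rewrite maxEle; case: ifP => _; [exists b|exists a].
Qed.

Lemma tsum_le {k} (f : 'I_k -> R) (i : 'I_k) {c} : (forall l, f l <= c) -> tsum f <= c.
Proof. by move=> H; have [j ->] := tsum_ex (f) i. Qed.

Lemma tsum_eqP {k} (f : 'I_k -> R) c (i : 'I_k) :
  (forall l, f l <= c) -> c <= f i -> tsum f = c.
Proof.
move=> H1 H2; apply/le_anti/andP; split; first exact: (tsum_le _ i).
by apply: (@le_trans _ _ (f i)) => //; apply: tsum_ub.
Qed.

Lemma tmxE {m k p} (A : 'M[R]_(m, k)) (B : 'M[R]_(k, p)) i j :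
  tmx A B i j = tsum (fun l => A i l + B l j).
Proof. by rewrite mxE. Qed.

Lemma tmxA {m k l p} (A : 'M[R]_(m, k)) (B : 'M[R]_(k, l)) (C : 'M[R]_(l, p))
  (k0 : 'I_k) (l0 : 'I_l) : tmx (tmx A B) C = tmx A (tmx B C).
Proof.
apply/matrixP => i j; rewrite !tmxE; apply/le_anti/andP; split.
- apply: (tsum_le _ l0) => r; rewrite tmxE.
  have [q ->] := tsum_ex (fun l1 => A i l1 + B l1 r) k0.
  apply: (letr _ (tsum_ub (fun l1 => A i l1 + tmx B C l1 j) q)); rewrite /= tmxE -addrA lerD2l.
  exact: (tsum_ub (fun l1 => B q l1 + C l1 j) r).
- apply: (tsum_le _ k0) => q; rewrite tmxE.
  have [r ->] := tsum_ex (fun l1 => B q l1 + C l1 j) l0.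
  apply: (letr _ (tsum_ub (fun l1 => tmx A B i l1 + C l1 j) r)); rewrite /= tmxE addrA lerD2r.
  exact: (tsum_ub (fun l1 => A i l1 + B l1 r) q).
Qed.

End Basics.

Section Fix.
Context {R : realType} {m : nat}.
Local Notation n := m.+1.
Context {E : 'M[R]_n}.
Context (hE : tidempotent E).

Lemma E_tri i k l : E i k + E k l <= E i l.
Proof. rewrite -{3}hE tmxE. exact: (tsum_ub (fun q => E i q + E q l) k). Qed.

Lemma E_diag_le i : E i i <= 0.
Proof. by have := E_tri i i i; rewrite -lerBrDr subrr. Qed.

Lemma tspan_fixL {p k} (g : 'I_k -> 'M[R]_(n, p)) x :
  (forall l, tmx E (g l) = g l) -> tspan g x -> tmx E x = x.
Proof.
move=> Hg [J [c Hx]]; apply/matrixP => i j; rewrite tmxE.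
apply/le_anti/andP; split.
- apply: (tsum_le _ ord0) => q.
  have [[l lJ ->] _] := Hx q j.
  have [_ ub] := Hx i j.
  apply: letr _ (ub l lJ); rewrite addrA lerD2r.
  by rewrite -{2}Hg tmxE; exact: (tsum_ub (fun q0 => E i q0 + g l q0 j) q).
- have [[l lJ ->] _] := Hx i j.
  rewrite -{1}Hg tmxE.
  have [q ->] := tsum_ex (fun q0 => E i q0 + g l q0 j) ord0.
  apply: letr _ (tsum_ub (fun q0 => E i q0 + x q0 j) q).
  rewrite -addrA lerD2l; have [_ ub] := Hx q j; exact: ub.
Qed.

Lemma tspan_fixR {p k} (g : 'I_k -> 'M[R]_(p, n)) x :
  (forall l, tmx (g l) E = g l) -> tspan g x -> tmx x E = x.
Proof.
move=> Hg [J [c Hx]]; apply/matrixP => i j; rewrite tmxE.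
apply/le_anti/andP; split.
- apply: (tsum_le _ ord0) => q.
  have [[l lJ ->] _] := Hx i q.
  have [_ ub] := Hx i j.
  apply: letr _ (ub l lJ); rewrite addrAC lerD2r.
  by rewrite -{2}Hg tmxE; exact: (tsum_ub (fun q0 => g l i q0 + E q0 j) q).
- have [[l lJ ->] _] := Hx i j.
  rewrite -{1}Hg tmxE.
  have [q ->] := tsum_ex (fun q0 => g l i q0 + E q0 j) ord0.
  apply: letr _ (tsum_ub (fun q0 => x i q0 + E q0 j) q).
  rewrite addrAC lerD2r; have [_ ub] := Hx i q; exact: ub.
Qed.

Lemma col_fix l : tmx E (col l E) = col l E.
Proof.
apply/matrixP => i j; rewrite tmxE !mxE.
have -> : (fun q => E i q + col l E q j) = (fun q => E i q + E q l).
  by apply/funext => q; rewrite mxE.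
by rewrite -tmxE hE.
Qed.

Lemma row_fix l : tmx (row l E) E = row l E.
Proof.
apply/matrixP => i j; rewrite tmxE !mxE.
have -> : (fun q => row l E i q + E q j) = (fun q => E l q + E q j).
  by apply/funext => q; rewrite mxE.
by rewrite -tmxE hE.
Qed.

Lemma colsp_fix x : colsp E x <-> tmx E x = x.
Proof.
split; first by apply: tspan_fixL => l; exact: col_fix.
move=> H; exists (finset (fun _ : 'I_n => true)), (fun l => x l ord0) => i j; rewrite (ord1 j).
split.
- rewrite -{1}H tmxE; have [l ->] := tsum_ex (fun q => E i q + x q ord0) ord0.
  by exists l => //; rewrite mxE.
- move=> l _; rewrite mxE -{2}H tmxE.
  exact: (tsum_ub (fun q => E i q + x q ord0) l).
Qed.

Lemma rowsp_fix x : rowsp E x <-> tmx x E = x.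
Proof.
split; first by apply: tspan_fixR => l; exact: row_fix.
move=> H; exists (finset (fun _ : 'I_n => true)), (fun l => x ord0 l) => i j; rewrite (ord1 i).
split.
- rewrite -{1}H tmxE; have [l ->] := tsum_ex (fun q => x ord0 q + E q j) ord0.
  by exists l => //; rewrite mxE addrC.
- move=> l _; rewrite mxE -{2}H tmxE addrC.
  exact: (tsum_ub (fun q => x ord0 q + E q j) l).
Qed.

Context (hd : forall i, E i i = 0).

Lemma colsp_ineq x : colsp E x <-> (forall i v, E i v + x v ord0 <= x i ord0).
Proof.
rewrite colsp_fix; split => H.
- move=> i v; rewrite -{2}H tmxE.
  exact: (tsum_ub (fun q => E i q + x q ord0) v).
- apply/matrixP => i j; rewrite (ord1 j) tmxE.
  by apply: (tsum_eqP _ _ i) => // ; rewrite hd add0r.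
Qed.

Lemma rowsp_ineq x : rowsp E x <-> (forall l j, x ord0 l + E l j <= x ord0 j).
Proof.
rewrite rowsp_fix; split => H.
- move=> l j; rewrite -{2}H tmxE.
  exact: (tsum_ub (fun q => x ord0 q + E q j) l).
- apply/matrixP => i j; rewrite (ord1 i) tmxE.
  by apply: (tsum_eqP _ _ j) => // ; rewrite hd addr0.
Qed.

End Fix.

Section Rank.
Context {R : realType} {m : nat}.
Local Notation n := m.+1.
Context {E : 'M[R]_n}.
Context (hE : tidempotent E).
Context (hr : forall s : seq 'cV[R]_n, uniq s -> generates (colsp E) s -> (n <= size s)%N).

Lemma RK j (J : {set 'I_n}) (c : 'I_n -> R) :
  j \notin J -> ~ (forall i, is_max_of (E i j) J (fun l => E i l + c l)).
Proof.
move=> jJ H.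
set s0 := [seq col l E | l <- enum 'I_n & l != j].
set s := undup s0.
have ins q : (q < size s)%N -> exists l, nth 0 s q = col l E.
  move=> qs; have : nth 0 s q \in s by exact: mem_nth.
  by rewrite mem_undup => /mapP [l _ ->]; exists l.
have : (n <= size s)%N.
  apply: hr; first exact: undup_uniq.
  apply/seteqP; split => x Hx.
    apply/(colsp_fix hE); apply: tspan_fixL Hx => q.
    by have [l ->] := ins q (ltn_ord q); exact: (col_fix hE).
  have Hf := (colsp_fix hE x).1 Hx.
  pose d l := if l \in J then Num.max (x l ord0) (c l + x j ord0) else x l ord0.
  have dub i l : E i l + d l <= x i ord0.
    rewrite /d; case: ifP => lJ.
      rewrite addr_maxr ge_max; apply/andP; split.
        by rewrite -{2}Hf tmxE; exact: (tsum_ub (fun q => E i q + x q ord0) l).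
      have [_ ub] := H i; apply: letr _ (_ : E i j + x j ord0 <= _).
        by rewrite addrA lerD2r; exact: ub.
      by rewrite -{2}Hf tmxE; exact: (tsum_ub (fun q => E i q + x q ord0) j).
    by rewrite -{2}Hf tmxE; exact: (tsum_ub (fun q => E i q + x q ord0) l).
  have dex i : exists2 l, l != j & x i ord0 <= E i l + d l.
    have [l hl] := tsum_ex (fun q => E i q + x q ord0) ord0.
    rewrite -tmxE Hf in hl.
    have [lj|/negPn/eqP elj] := boolP (l != j).
      exists l => //; rewrite hl lerD2l /d; case: ifP => // _.
      by rewrite le_max lexx.
    have [[l' l'J el'] _] := H i.
    exists l'; first by apply: contraNneq jJ => <-.
    rewrite hl elj el' -addrA lerD2l /d l'J.
    by rewrite le_max lexx orbT.
  pose cq (q : 'I_(size s)) :=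
    \big[Num.max/d (odflt j [pick l | col l E == nth 0 s q])]_(l | col l E == nth 0 s q) d l.
  exists (finset (fun _ : 'I_(size s) => true)), cq => i jj; rewrite (ord1 jj).
  have ub (q : 'I_(size s)) : nth 0 s q i ord0 + cq q <= x i ord0.
    rewrite addrC -lerBrDr; apply: bigmax_le.
      case: pickP => [l /eqP <-|/= hn].
        by rewrite lerBrDr mxE addrC dub.
      by have [l hl] := ins q (ltn_ord q); have := hn l; rewrite hl eqxx.
    by move=> l /eqP <-; rewrite lerBrDr mxE addrC dub.
  split => [|q _]; last exact: ub.
  have [l lj hl] := dex i.
  have ls : col l E \in s.
    rewrite mem_undup; apply/mapP; exists l => //.
    by rewrite mem_filter lj mem_enum.
  exists (Ordinal (etrans (index_mem _ _) ls)) => //.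
  apply/le_anti; rewrite ub andbT; apply: letr hl _.
  rewrite nth_index // mxE lerD2l.
  by apply: le_bigmax_cond; rewrite /= nth_index.
rewrite leqNgt => /negP; apply.
apply: (leq_ltn_trans (size_undup _)).
rewrite size_map size_filter.
have h : (0 < count (predC (fun l => l != j)) (enum 'I_n))%N.
  rewrite -has_count; apply/hasP; exists j; first by rewrite mem_enum.
  by rewrite /= eqxx.
rewrite -[X in (_ < X)%N]size_enum_ord -(count_predC (fun l => l != j) (enum 'I_n)).
by rewrite -{1}[count _ _]addn0 ltn_add2l.
Qed.

Lemma E_diag i : E i i = 0.
Proof.
apply/le_anti; rewrite (E_diag_le hE) /=; rewrite leNgt; apply/negP => hlt.
apply: (RK i (finset (fun l => l != i)) (fun l => E l i)).
  by rewrite inE eqxx.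
move=> r; split; last by move=> l _; exact: (E_tri hE).
have [l hl] := tsum_ex (fun q => E r q + E q i) ord0.
rewrite -tmxE hE in hl.
exists l; last by [].
rewrite inE; apply/negP => /eqP el; move: hl; rewrite el => hl.
by move: hlt; rewrite -(ltrD2l (E r i)) addr0 -hl ltxx.
Qed.

End Rank.

Section Struct.
Context {R : realType} {m : nat}.
Local Notation n := m.+1.
Context {E A Y Y' : 'M[R]_n}.
Context (hE : tidempotent E) (hd : forall i, E i i = 0).
Context (hRK : forall j (J : {set 'I_n}) (c : 'I_n -> R),
  j \notin J -> ~ (forall i, is_max_of (E i j) J (fun l => E i l + c l))).
Context (EA : tmx E A = A) (AE : tmx A E = A) (hY : E = tmx A Y) (hY' : E = tmx Y' A).

Lemma col_ext j : exists k, forall i, E i j = A i k + Y k j.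
Proof.
have [k hk] := tsum_ex (fun q => A j q + Y q j) ord0.
rewrite -tmxE -hY hd in hk.
exists k => i; apply/le_anti/andP; split.
- have h1 : E i j + A j k <= A i k.
    by rewrite -{2}EA tmxE; exact: (tsum_ub (fun q => E i q + A q k) j).
  lra.
- by rewrite hY tmxE; exact: (tsum_ub (fun q => A i q + Y q j) k).
Qed.

Lemma perm_form : exists (s : {perm 'I_n}) (lam : 'I_n -> R),
  forall i k, A i k = E i (s k) + lam k.
Proof.
have [rho hrho] := fin_all_exists col_ext.
have rinj : injective rho.
  move=> j j' ej; apply/eqP; apply/negPn/negP => nj.
  apply: (hRK j (finset (pred1 j')) (fun _ => Y (rho j) j - Y (rho j) j')).
    by rewrite inE.
  move=> i; split.
    exists j'; first by rewrite inE /=.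
    rewrite (hrho j i) (hrho j' i) ej; lra.
  move=> l; rewrite inE => /eqP ->.
  rewrite (hrho j i) (hrho j' i) ej; lra.
exists (perm rinj)^-1%g, (fun k => - Y k ((perm rinj)^-1%g k)) => i k.
have := hrho ((perm rinj)^-1%g k) i.
have -> : rho ((perm rinj)^-1%g k) = k.
  by move: (permE rinj ((perm rinj)^-1%g k)); rewrite permKV => <-.
lra.
Qed.

Variables (s : {perm 'I_n}) (lam : 'I_n -> R).
Hypothesis hA : forall i k, A i k = E i (s k) + lam k.

Lemma conjE a b : E (s a) (s b) = E a b + lam a - lam b.
Proof.
apply/le_anti/andP; split.
- have [k0 hk] := tsum_ex (fun q => Y' a q + A q a) ord0.
  rewrite -tmxE -hY' hd hA in hk.
  have h1 : Y' a k0 + A k0 b <= E a b.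
    by rewrite hY' tmxE; exact: (tsum_ub (fun q => Y' a q + A q b) k0).
  have h2 := E_tri hE k0 (s a) (s b).
  rewrite hA in h1; lra.
- have h1 : A (s a) a + E a b <= A (s a) b.
    by rewrite -{2}AE tmxE; exact: (tsum_ub (fun q => A (s a) q + E q b) a).
  rewrite !hA hd in h1; lra.
Qed.

Definition Mc (x : 'cV[R]_n) : 'cV[R]_n :=
  \matrix_(i, j) (x (s^-1%g i) j + lam (s^-1%g i)).
Definition Mci (x : 'cV[R]_n) : 'cV[R]_n :=
  \matrix_(i, j) (x (s i) j - lam i).
Definition Nr (x : 'rV[R]_n) : 'rV[R]_n :=
  \matrix_(i, j) (x i (s j) + lam j).
Definition Nri (x : 'rV[R]_n) : 'rV[R]_n :=
  \matrix_(i, j) (x i (s^-1%g j) - lam (s^-1%g j)).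

Lemma McK x : Mci (Mc x) = x.
Proof. by apply/matrixP => i j; rewrite !mxE permK addrK. Qed.
Lemma MciK x : Mc (Mci x) = x.
Proof. by apply/matrixP => i j; rewrite !mxE permKV subrK. Qed.
Lemma NrK x : Nri (Nr x) = x.
Proof. by apply/matrixP => i j; rewrite !mxE permKV addrK. Qed.
Lemma NriK x : Nr (Nri x) = x.
Proof. by apply/matrixP => i j; rewrite !mxE permK subrK. Qed.

Lemma act_col x : colsp E x -> tmx A x = Mc x.
Proof.
move/(colsp_ineq hE hd) => H; apply/matrixP => i j; rewrite (ord1 j) tmxE !mxE.
apply: (tsum_eqP _ _ (s^-1%g i)).
  move=> k; rewrite hA -{1}(permKV s i) conjE.
  have := H (s^-1%g i) k; lra.
by rewrite hA permKV hd; lra.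
Qed.

Lemma act_row x : rowsp E x -> tmx x A = Nr x.
Proof.
move/(rowsp_ineq hE hd) => H; apply/matrixP => i j; rewrite (ord1 i) tmxE !mxE.
apply: (tsum_eqP _ _ (s j)).
  by move=> k; rewrite hA; have := H k (s j); lra.
by rewrite hA hd; lra.
Qed.

Lemma Mc_col x : colsp E (Mc x) <-> colsp E x.
Proof.
rewrite !(colsp_ineq hE hd); split => H.
- move=> a b; have := H (s a) (s b); rewrite !mxE !permK conjE; lra.
- move=> i v.
  have [a ->] : exists a, i = s a by exists (s^-1%g i); rewrite permKV.
  have [b ->] : exists b, v = s b by exists (s^-1%g v); rewrite permKV.
  rewrite !mxE !permK conjE; have := H a b; lra.
Qed.

Lemma Nr_row x : rowsp E (Nr x) <-> rowsp E x.
Proof.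
rewrite !(rowsp_ineq hE hd); split => H.
- move=> a b.
  have [l ->] : exists l, a = s l by exists (s^-1%g a); rewrite permKV.
  have [j ->] : exists j, b = s j by exists (s^-1%g b); rewrite permKV.
  have := H l j; rewrite !mxE conjE; lra.
- move=> l j; rewrite !mxE; have := H (s l) (s j); rewrite conjE; lra.
Qed.

End Struct.

Lemma ballR {R : realType} (a b e : R) : ball a e b <-> `|a - b| < e.
Proof. by rewrite -ball_normE. Qed.

Lemma ball_map {R : realType} {p q} (f : 'M[R]_(p, q) -> 'M[R]_(p, q))
  (a : 'I_p -> 'I_p) (b : 'I_q -> 'I_q) (c : 'I_p -> 'I_q -> R) :
  (forall x i j, f x i j = x (a i) (b j) + c i j) ->
  forall x y e, ball x e y -> ball (f x) e (f y).
Proof.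
move=> hf x y e [e0 H]; split => // i j; rewrite !hf.
move: (H (a i) (b j)); rewrite !ballR.
by rewrite opprD addrACA subrr addr0.
Qed.

Lemma int_map {R : realType} {p q} (K : set 'M[R]_(p, q)) (f g : 'M[R]_(p, q) -> 'M[R]_(p, q)) :
  cancel g f -> cancel f g -> (forall x, K (f x) <-> K x) ->
  (forall x y e, ball x e y -> ball (g x) e (g y)) ->
  forall x, interior K x -> interior K (f x).
Proof.
move=> fg gf Kf gb x /nbhs_ballP [e e0 H]; apply/nbhs_ballP; exists e => // z hz.
have : K (g z) by apply: H; rewrite -[x]gf; exact: gb.
by rewrite -Kf fg.
Qed.

Lemma clos_map {R : realType} {p q} (K : set 'M[R]_(p, q)) (f : 'M[R]_(p, q) -> 'M[R]_(p, q)) :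
  (forall x, K (f x) <-> K x) ->
  (forall x y e, ball x e y -> ball (f x) e (f y)) ->
  forall x, closure K x -> closure K (f x).
Proof.
move=> Kf fb x H B /nbhs_ballP [e e0 hB].
have : nbhs x [set z | B (f z)].
  by apply/nbhs_ballP; exists e => // z hz; apply: hB; exact: fb.
move/H => [z [Kz Bz]]; exists (f z); split => //; exact/Kf.
Qed.

Lemma bd_map {R : realType} {p q} (K : set 'M[R]_(p, q)) (f g : 'M[R]_(p, q) -> 'M[R]_(p, q)) :
  cancel g f -> cancel f g -> (forall x, K (f x) <-> K x) ->
  (forall x y e, ball x e y -> ball (f x) e (f y)) ->
  (forall x y e, ball x e y -> ball (g x) e (g y)) ->
  forall x, tboundary K x -> tboundary K (f x).
Proof.
move=> fg gf Kf fb gb x [cx nix]; split; first exact: clos_map.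
move=> ifx; apply: nix; rewrite -[x]gf.
apply: (int_map K g f) => //.
by move=> y; rewrite -Kf fg.
Qed.

Lemma clos_ineq {R : realType} {p q} (K : set 'M[R]_(p, q)) (I : Type)
  (a b : I -> 'I_p * 'I_q) (w : I -> R) :
  (forall x, K x <-> forall k, x (a k).1 (a k).2 + w k <= x (b k).1 (b k).2) ->
  forall x, closure K x -> K x.
Proof.
move=> hK x cx; apply/hK => k; rewrite leNgt; apply/negP => hlt.
set e := (x (a k).1 (a k).2 + w k - x (b k).1 (b k).2) / 2.
have e0 : 0 < e by rewrite /e; lra.
have [z [Kz [_ bz]]] := cx _ (nbhsx_ballx x e e0).
have := (hK z).1 Kz k.
have := bz (a k).1 (a k).2; have := bz (b k).1 (b k).2.
rewrite !ballR !ltr_norml => /andP [h1 h2] /andP [h3 h4].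
rewrite /e in h1 h2 h3 h4; lra.
Qed.

Lemma tsum_max {R : realType} {k} (f g : 'I_k -> R) (i0 : 'I_k) :
  tsum (fun l => Num.max (f l) (g l)) = Num.max (tsum f) (tsum g).
Proof.
apply/le_anti/andP; split.
- apply: (tsum_le _ i0) => l; rewrite ge_max !le_max.
  by rewrite (tsum_ub f l) (tsum_ub g l) orbT.
- rewrite ge_max; apply/andP; split; apply: (tsum_le _ i0) => l;
  apply: letr _ (tsum_ub (fun l => Num.max (f l) (g l)) l);
  by rewrite le_max lexx ?orbT.
Qed.

Lemma tsum_shift {R : realType} {k} (f : 'I_k -> R) c (i0 : 'I_k) :
  tsum (fun l => f l + c) = tsum f + c.
Proof.
have [j hj] := tsum_ex f i0.
apply: (tsum_eqP _ _ j); last by rewrite hj.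
by move=> l; rewrite lerD2r; exact: tsum_ub.
Qed.

Lemma proj_bd {R : realType} {m} {E : 'M[R]_m.+1} (hE : tidempotent E)
  (hd : forall i, E i i = 0) (x : 'cV[R]_m.+1) :
  ~ colsp E x -> tboundary (colsp E) (tmx E x).
Proof.
move=> nc; set y := tmx E x.
have Ky : colsp E y.
  by apply/(colsp_fix hE); rewrite /y -(tmxA E E x ord0 ord0) hE.
have yx i : x i ord0 <= y i ord0.
  rewrite /y tmxE; apply: letr _ (tsum_ub (fun q => E i q + x q ord0) i).
  by rewrite hd add0r.
split; first exact: subset_closure.
move=> /nbhs_ballP [e /= e0 hB].
have [i hi] : exists i, x i ord0 < y i ord0.
  case: (pselect (exists i, x i ord0 < y i ord0)) => // hn; exfalso; apply: nc.
  apply/(colsp_fix hE); apply/matrixP => i j; rewrite (ord1 j).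
  apply/le_anti; rewrite yx andbT leNgt; apply/negP => h; apply: hn.
  by exists i.
have yE : y = tmx E x by [].
clearbody y.
set d := Num.min (e / 2) (y i ord0 - x i ord0).
have d0 : 0 < d by rewrite /d lt_min; apply/andP; split; lra.
have d1 : d <= e / 2 by rewrite /d ge_min lexx.
have d2 : d <= y i ord0 - x i ord0 by rewrite /d ge_min lexx orbT.
pose z : 'cV[R]_m.+1 := \matrix_(k, l) (if k == i then y k l - d else y k l).
have bz : ball y e z.
  split => // k l; apply/ballR; rewrite /z mxE; case: ifP => _.
    rewrite opprB addrC subrK ger0_norm; lra.
  by rewrite subrr normr0.
have Kz := hB z bz.
have zx k : x k ord0 <= z k ord0.
  rewrite /z mxE; case: ifP => [/eqP ->|_]; [lra|exact: yx].
have := (colsp_fix hE z).1 Kz => /matrixP /(_ i ord0).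
rewrite tmxE => hz.
have : y i ord0 <= z i ord0.
  rewrite -hz yE tmxE; apply: (tsum_le _ ord0) => l.
  apply: letr _ (tsum_ub (fun q => E i q + z q ord0) l).
  by rewrite lerD2l.
rewrite /z mxE eqxx; lra.
Qed.

Theorem lemma7p2 (R : realType) (n : nat) (E A : 'M[R]_n) :
  tidempotent E -> has_rank E n -> Hrel A E ->
  (* column action phi_A : x |-> A (x) x on C(E) *)
  [/\ (forall x : 'cV[R]_n, interior (colsp E) x -> interior (colsp E) (tmx A x)),
      (forall x : 'cV[R]_n, tboundary (colsp E) x -> tboundary (colsp E) (tmx A x))
    & (forall x : 'cV[R]_n, ~ colsp E x -> tboundary (colsp E) (tmx A x))] /\
  (* row action x |-> x (x) A on R(E) *)
  [/\ (forall x : 'rV[R]_n, rowsp E x -> rowsp E (tmx x A)),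
      {in rowsp E &, injective (fun x : 'rV[R]_n => tmx x A)},
      (forall y : 'rV[R]_n, rowsp E y -> exists2 x, rowsp E x & tmx x A = y),
      (forall x y : 'rV[R]_n, rowsp E x -> rowsp E y ->
          tmx (vmax x y) A = vmax (tmx x A) (tmx y A))
    & (forall (c : R) (x : 'rV[R]_n), rowsp E x ->
          tmx (vshift c x) A = vshift c (tmx x A))] /\
  [/\ (forall x : 'rV[R]_n, interior (rowsp E) x -> interior (rowsp E) (tmx x A))
    & (forall x : 'rV[R]_n, tboundary (rowsp E) x -> tboundary (rowsp E) (tmx x A))].
Proof.
move=> hE hrk [HR HL].
case: n E A hE hrk HR HL => [|m] E A hE hrk HR HL.
  have c0 : colsp E = setT.
    apply/seteqP; split => // x _.
    by exists (finset (fun _ : 'I_0 => true)), (fun _ => 0) => -[i hi]; exfalso; rewrite ltn0 in hi.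
  have r0 : rowsp E = setT.
    apply/seteqP; split => // x _.
    by exists (finset (fun _ : 'I_0 => true)), (fun _ => 0) => i -[j hj]; exfalso; rewrite ltn0 in hj.
  have e0 (u v : 'rV[R]_0) : u = v by apply/matrixP => i -[j hj]; exfalso; rewrite ltn0 in hj.
  rewrite c0 r0; split; [split|split; [split|split]].
  - by move=> x _; exact: filterT.
  - by move=> x [_ ni]; exfalso; apply: ni; exact: filterT.
  - by move=> x nx; exfalso; exact: nx.
  - by [].
  - by move=> x y _ _ _; exact: e0.
  - by move=> y _; exists y.
  - by move=> x y _ _; exact: e0.
  - by move=> c x _; exact: e0.
  - by move=> x _; exact: filterT.
  - by move=> x [_ ni]; exfalso; apply: ni; exact: filterT.
have hr := hrk.2.
have hd := E_diag hE hr.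
have hRK := RK hE hr.
have EA : tmx E A = A.
  have : rideal E A by rewrite -HR; left.
  case => [-> | [X ->]]; first exact: hE.
  by rewrite -(tmxA E E X ord0 ord0) hE.
have AE : tmx A E = A.
  have : lideal E A by rewrite -HL; left.
  case => [-> | [X ->]]; first exact: hE.
  by rewrite (tmxA X E E ord0 ord0) hE.
have [Y hY] : exists Y, E = tmx A Y.
  have : rideal A E by rewrite HR; left.
  case => [eq | [Y ->]]; last by exists Y.
  by exists E; rewrite -eq hE.
have [Y' hY'] : exists Y', E = tmx Y' A.
  have : lideal A E by rewrite HL; left.
  case => [eq | [Y' ->]]; last by exists Y'.
  by exists E; rewrite -eq hE.
have [s [lam hA]] := perm_form hd hRK EA hY.
have actc := act_col hE hd AE hY' s lam hA.
have Mcc := Mc_col hE hd AE hY' s lam hA.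
have actr := act_row hE hd s lam hA.
have Nrr := Nr_row hE hd AE hY' s lam hA.
have bMc : forall x y e, ball x e y -> ball (Mc s lam x) e (Mc s lam y).
  by apply: (ball_map _ (fun i => (s^-1)%g i) id (fun i _ => lam ((s^-1)%g i))) => x i j; rewrite mxE.
have bMci : forall x y e, ball x e y -> ball (Mci s lam x) e (Mci s lam y).
  by apply: (ball_map _ (fun i => s i) id (fun i _ => - lam i)) => x i j; rewrite mxE.
have bNr : forall x y e, ball x e y -> ball (Nr s lam x) e (Nr s lam y).
  by apply: (ball_map _ id (fun j => s j) (fun _ j => lam j)) => x i j; rewrite mxE.
have bNri : forall x y e, ball x e y -> ball (Nri s lam x) e (Nri s lam y).
  by apply: (ball_map _ id (fun j => (s^-1)%g j) (fun _ j => - lam ((s^-1)%g j))) => x i j; rewrite mxE.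
have clc : forall x, closure (colsp E) x -> colsp E x.
  apply: (clos_ineq (colsp E) _ (fun k : 'I_m.+1 * 'I_m.+1 => (k.2, ord0))
     (fun k => (k.1, ord0)) (fun k => E k.1 k.2)) => x.
  rewrite (colsp_ineq hE hd); split => H.
    by move=> [i v] /=; rewrite addrC; exact: H.
  by move=> i v; rewrite addrC; exact: (H (i, v)).
have clr : forall x, closure (rowsp E) x -> rowsp E x.
  apply: (clos_ineq (rowsp E) _ (fun k : 'I_m.+1 * 'I_m.+1 => (ord0, k.1))
     (fun k => (ord0, k.2)) (fun k => E k.1 k.2)) => x.
  rewrite (rowsp_ineq hE hd); split => H.
    by move=> [i v] /=; exact: H.
  by move=> i v; exact: (H (i, v)).
have colii : forall x, tboundary (colsp E) x -> tboundary (colsp E) (tmx A x).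
  move=> x bx; rewrite actc; last exact: clc bx.1.
  exact: (bd_map (colsp E) (Mc s lam) (Mci s lam) (MciK s lam) (McK s lam) Mcc bMc bMci x bx).
split; [split|split; [split|split]].
- move=> x ix; rewrite actc; last exact: nbhs_singleton ix.
  exact: (int_map (colsp E) (Mc s lam) (Mci s lam) (MciK s lam) (McK s lam) Mcc bMci x ix).
- exact: colii.
- move=> x nx.
  have -> : tmx A x = tmx A (tmx E x) by rewrite -(tmxA A E x ord0 ord0) AE.
  exact/colii/(proj_bd hE hd).
- move=> x /(rowsp_fix hE) hx; apply/(rowsp_fix hE).
  by rewrite (tmxA x A E ord0 ord0) AE.
- move=> x y; rewrite !inE => /(rowsp_fix hE) hx /(rowsp_fix hE) hy /= exy.
  rewrite -hx -hy hY -(tmxA x A Y ord0 ord0) -(tmxA y A Y ord0 ord0).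
  by rewrite exy.
- move=> y /(rowsp_fix hE) hy; exists (tmx (tmx y Y') E).
    by apply/(rowsp_fix hE); rewrite (tmxA _ E E ord0 ord0) hE.
  by rewrite (tmxA _ E A ord0 ord0) EA (tmxA y Y' A ord0 ord0) -hY' hy.
- move=> x y _ _; apply/matrixP => i j; rewrite [RHS]mxE !tmxE.
  have -> : (fun l => vmax x y i l + A l j) =
            (fun l => Num.max (x i l + A l j) (y i l + A l j)).
    by apply/funext => l; rewrite mxE addr_maxl.
  exact: tsum_max.
- move=> c x _; apply/matrixP => i j; rewrite [RHS]mxE !tmxE.
  have -> : (fun l => vshift c x i l + A l j) = (fun l => (x i l + A l j) + c).
    by apply/funext => l; rewrite mxE addrAC.
  exact: tsum_shift.
- move=> x ix; rewrite actr; last exact: nbhs_singleton ix.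
  exact: (int_map (rowsp E) (Nr s lam) (Nri s lam) (NriK s lam) (NrK s lam) Nrr bNri x ix).
- move=> x bx; rewrite actr; last exact: clr bx.1.
  exact: (bd_map (rowsp E) (Nr s lam) (Nri s lam) (NriK s lam) (NrK s lam) Nrr bNr bNri x bx).
Qed.
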